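(* Let $A$ be a $d$-dimensional polystochastic matrix of order $n\ge 2$. Suppose there are subsets $S_1,\dots,S_d\subseteq\{0,\dots,n-1\}$ with $|S_i|=n-1$ such that $a_\alpha\in\{0,1\}$ for all $\alpha\in S_1\times\dots\times S_d$. Then $A$ is a multidimensional permutation, i.e. all entries of $A$ are in $\{0,1\}$.
   Context: $A=(a_\alpha)_{\alpha\in\{0,\dots,n-1\}^d}$ is polystochastic if nonnegative and every line (set of indices obtained by fixing all coordinates but one) sums to $1$. A multidimensional permutation is a polystochastic $(0,1)$-matrix. *)

(* Defs.v *)
From mathcomp Require Import all_boot all_order all_algebra.
Set Implicit Arguments. Unset Strict Implicit. Unset Printing Implicit Defensive.
Import Order.TTheory GRing.Theory Num.Theory.
Local Open Scope ring_scope.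

Definition mdmatrix (R : Type) (d n : nat) := {ffun {ffun 'I_d -> 'I_n} -> R}.

Definition upd (d n : nat) (alpha : {ffun 'I_d -> 'I_n}) (k : 'I_d) (j : 'I_n)
  : {ffun 'I_d -> 'I_n} := [ffun i => if i == k then j else alpha i].

Definition polystochastic (R : numDomainType) (d n : nat) (A : mdmatrix R d n) :=
  (forall alpha, 0 <= A alpha) /\
  (forall (alpha : {ffun 'I_d -> 'I_n}) (k : 'I_d), \sum_(j < n) A (upd alpha k j) = 1).

Definition is01 (R : numDomainType) (x : R) := x = 0 \/ x = 1.

Definition md_permutation (R : numDomainType) (d n : nat) (A : mdmatrix R d n) :=
  polystochastic A /\ forall alpha, is01 (A alpha).

(* Main.v *)
Require Import Defs.
From mathcomp Require Import all_boot all_order all_algebra.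
From mathcomp Require Import lra zify.
Import Order.TTheory GRing.Theory Num.Theory.
Local Open Scope ring_scope.

Lemma notin_single {n} {T : {set 'I_n}} {a j : 'I_n} :
  #|T| = n.-1 -> a \notin T -> j != a -> j \in T.
Proof.
move=> hc ha hj; apply/negPn/negP => hjT.
have sub : T \subset ~: [set a; j].
  apply/subsetP => x xT; rewrite !inE; apply/negP => /orP [] /eqP ex; subst x.
  by rewrite xT in ha. by rewrite xT in hjT.
have := subset_leq_card sub.
have hc2 := cardsC [set a; j]; rewrite cards2 eq_sym hj card_ord /= in hc2.
have : (0 < n)%N by apply: leq_ltn_trans (ltn_ord a).
rewrite hc; move: hc2; move: #|~: [set a; j]| => m; lia.
Qed.

Theorem mainTheorem8 (R : realFieldType) (d n : nat) (A : mdmatrix R d n)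
  (S : 'I_d -> {set 'I_n}) :
  (2 <= n)%N ->
  polystochastic A ->
  (forall i, #|S i| = n.-1) ->
  (forall alpha : {ffun 'I_d -> 'I_n}, (forall i, alpha i \in S i) -> is01 (A alpha)) ->
  md_permutation A.
Proof.
move=> hn hP hS h01; split => //; case: hP => hpos hsum.
pose X (alpha : {ffun 'I_d -> 'I_n}) := [set i | alpha i \notin S i].
suff H : forall k alpha, (#|X alpha| <= k)%N -> is01 (A alpha).
  by move=> alpha; exact: (H _ alpha (leqnn _)).
elim=> [|k IH] alpha hk.
  apply: h01 => i; apply/negPn/negP => hi.
  have : i \in X alpha by rewrite inE hi.
  by move: hk; rewrite leqn0 cards_eq0 => /eqP ->; rewrite inE.
case: (set_0Vmem (X alpha)) => [e|[i hi]].
  apply: h01 => i; apply/negPn/negP => hi.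
  have : i \in X alpha by rewrite inE hi.
  by rewrite e inE.
have hai : alpha i \notin S i by move: hi; rewrite inE.
have Hup : forall j, j != alpha i -> is01 (A (upd alpha i j)).
  move=> j hj; apply: IH.
  have pr : X (upd alpha i j) \proper X alpha.
    apply/properP; split.
      apply/subsetP => x; rewrite !inE ffunE; case: eqP => // ->.
      by rewrite (notin_single (hS i) hai hj).
    by exists i => //; rewrite inE ffunE eqxx (notin_single (hS i) hai hj).
  have := proper_card pr; move: hk; lia.
have e := hsum alpha i.
rewrite (bigD1 (alpha i)) //= in e.
have E : upd alpha i (alpha i) = alpha.
  by apply/ffunP => x; rewrite ffunE; case: eqP => // ->.
rewrite E in e.
have ha0 := hpos alpha.
case: (pickP (fun j => (j != alpha i) && (A (upd alpha i j) == 1))) => [j0 /andP [hj0 /eqP h1]|hno].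
  left.
  rewrite (bigD1 j0) //= h1 in e.
  have : 0 <= \sum_(j < n | (j != alpha i) && (j != j0)) A (upd alpha i j).
    by apply: sumr_ge0 => j _; apply: hpos.
  lra.
right.
rewrite big1 ?addr0 // in e.
move=> j hj; have := hno j; rewrite hj /=; case: (Hup j hj) => -> //.
by rewrite eqxx.
Qed.
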